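(* Let $\imath:V\hookrightarrow U$ be an inclusion of regular molecules such that $n:=\dim U=\dim V$ and $V$ is round. If $\imath$ is a submolecule inclusion, then $\mathcal F_{n-1}V$ (identified with the induced subgraph of $\mathcal F_{n-1}U$ on the image of $\imath$) is a path-induced subgraph of $\mathcal F_{n-1}U$.
   Context: All posets are finite; $y$ covers $x$ if $x<y$ with nothing strictly between. A finite poset is graded if for each $x$ all maximal covering chains descending from $x$ have the same length $\dim x$; $U_n$ denotes elements of dimension $n$. An oriented graded poset is a finite graded poset with a label $\pm$ on each covering pair; $\Delta^\alpha x$ ($\nabla^\alpha x$) is the set of elements covered by (covering) $x$ with label $\alpha$. For closed (downward closed) $U$, with $\mathrm{cl}$ downward closure, $\max U$ maximal elements, $\dim U$ maximal dimension: $\Delta^\alpha_nU=\{x\in U_n:\nabla^{-\alpha}x\cap U=\emptyset\}$, $\partial^\alpha_nU=\mathrm{cl}(\Delta^\alpha_nU)\cup\bigcup_{k<n}\mathrm{cl}((\max U)_k)$ ($\emptyset$ for $n<0$), $\partial_nU=\partial^-_nU\cup\partial^+_nU$, subscript omitted for $n=\dim U-1$; $\Delta^\alpha_kx:=\Delta^\alpha_k\mathrm{cl}\{x\}$. Maps are functions with $f(\partial^\alpha_n\mathrm{cl}\{x\})=\partial^\alpha_n\mathrm{cl}\{f(x)\}$; inclusions are injective maps. $U\#_kV$ is the pushout of $U\hookleftarrow\partial^+_kU\cong\partial^-_kV\hookrightarrow V$; for $U,V$ of equal dimension $n$ with $\partial U\cong\partial V$ compatibly with $\partial^\pm$, $U\Rightarrow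 V$ is that pushout with a new element $\top$ of dimension $n+1$, $\Delta^-\top=U_n$, $\Delta^+\top=V_n$. $U$ is round if $\partial^-_nU\cap\partial^+_nU=\partial_{n-1}U$ for all $n<\dim U$. Regular molecules: smallest isomorphism-closed class containing the point, closed under $U\#_kV$ ($k<\min(\dim U,\dim V)$) and $U\Rightarrow V$ for round regular molecules of equal dimension. Submolecule inclusions: smallest class of inclusions of regular molecules containing isomorphisms and $U\hookrightarrow U\#_kV\hookleftarrow V$, closed under composition. $\mathcal F_kU$: directed graph with vertices $\bigcup_{i>k}U_i$ and edge $x\to y$ iff $\Delta^+_kx\cap\Delta^-_ky\ne\emptyset$. For a directed graph $\mathcal G$ and vertex subset $W$, the induced subgraph on $W$ is path-induced if for all $x,y\in W$ every path from $x$ to $y$ in $\mathcal G$ lies in the induced subgraph. *)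

(* Defs.v *)
From HB Require Import structures.
From mathcomp Require Import all_boot all_order all_algebra.
Set Implicit Arguments. Unset Strict Implicit. Unset Printing Implicit Defensive.

Definition covers (T : finType) (le : rel T) (y x : T) : bool :=
  [&& le x y, x != y &
      [forall z, (le x z && le z y) ==> ((z == x) || (z == y))]].

Definition max_down_chain (T : finType) (le : rel T) (x : T) (s : seq T) : bool :=
  path (covers le) x s && [forall z, ~~ covers le (last x s) z].

Definition graded (T : finType) (le : rel T) : Prop :=
  forall x s t, max_down_chain le x s -> max_down_chain le x t -> size s = size t.

(** An oriented graded poset: finite poset, graded, with a label on each
    covering pair.  [olab x y] is the label of the covering pair x < y
    (true = +, false = -); its value on non-covering pairs is irrelevant. *)
Record ogpos := OGPos {
  ocar :> finType;
  ole : rel ocar;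
  ole_refl : reflexive ole;
  ole_anti : antisymmetric ole;
  ole_trans : transitive ole;
  ograded : graded ole;
  olab : ocar -> ocar -> bool
}.

Section OG.
Variable P : ogpos.

(** dim x: length of a (greedily chosen) maximal descending covering chain;
    by gradedness all such chains have this length.  Fuel #|P| suffices. *)
Fixpoint dimf (fuel : nat) (x : P) : nat :=
  match fuel with
  | 0 => 0
  | f.+1 => match [pick y | covers (@ole P) x y] with
            | Some y => (dimf f y).+1
            | None => 0
            end
  end.
Definition odim (x : P) : nat := dimf #|P| x.

Definition cl (A : {set P}) : {set P} := [set x | [exists y in A, ole x y]].
Definition maxel (A : {set P}) : {set P} :=
  [set x in A | [forall y in A, ole x y ==> (y == x)]].
(** dimension of a set (used only for nonempty sets) *)
Definition dimS (A : {set P}) : nat := \max_(x in A) odim x.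

(** Delta^a_n A = { x in A_n | nabla^{-a} x cap A = emptyset } *)
Definition Delta (a : bool) (n : nat) (A : {set P}) : {set P} :=
  [set x in A | (odim x == n) &&
     [forall y in A, ~~ (covers (@ole P) y x && (olab x y == ~~ a))]].

Definition bd (a : bool) (n : nat) (A : {set P}) : {set P} :=
  cl (Delta a n A) :|: cl [set x in maxel A | odim x < n].
Definition bdd (n : nat) (A : {set P}) : {set P} := bd false n A :|: bd true n A.

Definition bdm1 (a : bool) (n : nat) (A : {set P}) : {set P} :=
  if n is m.+1 then bd a m A else set0.
Definition bddm1 (n : nat) (A : {set P}) : {set P} :=
  if n is m.+1 then bdd m A else set0.

Definition round (A : {set P}) : Prop :=
  forall n, n < dimS A -> bd false n A :&: bd true n A = bddm1 n A.

Definition DeltaZ (a : bool) (k : int) (A : {set P}) : {set P} :=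
  match k with Posz m => Delta a m A | Negz _ => set0 end.

Definition flow_vertex (k : int) (x : P) : bool := (k < (odim x)%:Z)%R.
Definition flow_edge (k : int) : rel P := fun x y =>
  [&& flow_vertex k x, flow_vertex k y &
      DeltaZ true k (cl [set x]) :&: DeltaZ false k (cl [set y]) != set0].

Definition path_induced (e : rel P) (W : {set P}) : Prop :=
  forall x y, x \in W -> y \in W ->
  forall s, path e x s -> last x s = y -> all (fun z => z \in W) s.

End OG.

Definition is_map (P Q : ogpos) (f : P -> Q) : Prop :=
  forall (x : P) (a : bool) (n : nat),
    f @: bd a n (cl [set x]) = bd a n (cl [set f x]).
Definition inclusion (P Q : ogpos) (f : P -> Q) : Prop := is_map f /\ injective f.
Definition is_iso (P Q : ogpos) (f : P -> Q) : Prop := inclusion f /\ bijective f.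

(** W (with inclusions iU, iV) is the pasting U #_k V: the pushout of
    U <- partial^+_k U ~= partial^-_k V -> V. *)
Definition is_paste (k : nat) (U V W : ogpos) (iU : U -> W) (iV : V -> W) : Prop :=
  [/\ inclusion iU, inclusion iV,
      (iU @: [set: U]) :|: (iV @: [set: V]) = [set: W],
      (iU @: [set: U]) :&: (iV @: [set: V]) = iU @: bd true k [set: U] &
      iU @: bd true k [set: U] = iV @: bd false k [set: V]].

Definition is_rewrite (U V W : ogpos) (iU : U -> W) (iV : V -> W) (top : W) : Prop :=
  let n := dimS [set: U] in
  [/\ dimS [set: V] = n, inclusion iU, inclusion iV &
      (iU @: [set: U]) :|: (iV @: [set: V]) = [set~ top]] /\
  [/\ (iU @: [set: U]) :&: (iV @: [set: V]) = iU @: bddm1 n [set: U],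
      (forall a, iU @: bdm1 a n [set: U] = iV @: bdm1 a n [set: V]),
      (forall w, covers (@ole W) top w <->
                 w \in (iU @: [set u | odim u == n]) :|: (iV @: [set v | odim v == n])) &
      (forall w, covers (@ole W) top w ->
                 olab w top = (w \in iV @: [set v | odim v == n]))].

Inductive regmol : ogpos -> Prop :=
| rm_point (P : ogpos) : #|P| = 1 -> regmol P
| rm_iso (U W : ogpos) (f : U -> W) : regmol U -> is_iso f -> regmol W
| rm_paste (k : nat) (U V W : ogpos) (iU : U -> W) (iV : V -> W) :
    regmol U -> regmol V -> k < minn (dimS [set: U]) (dimS [set: V]) ->
    is_paste k iU iV -> regmol W
| rm_rewrite (U V W : ogpos) (iU : U -> W) (iV : V -> W) (top : W) :
    regmol U -> regmol V -> round [set: U] -> round [set: V] ->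
    is_rewrite iU iV top -> regmol W.

Inductive submol : forall (V U : ogpos), (V -> U) -> Prop :=
| sm_iso (V U : ogpos) (f : V -> U) : regmol V -> regmol U -> is_iso f -> submol f
| sm_left (k : nat) (U V W : ogpos) (iU : U -> W) (iV : V -> W) :
    regmol U -> regmol V -> regmol W -> is_paste k iU iV -> submol iU
| sm_right (k : nat) (U V W : ogpos) (iU : U -> W) (iV : V -> W) :
    regmol U -> regmol V -> regmol W -> is_paste k iU iV -> submol iV
| sm_comp (A B C : ogpos) (f : A -> B) (g : B -> C) :
    submol f -> submol g -> submol (fun x => g (f x)).

(* Main.v *)
Require Import Defs.
From mathcomp Require Import all_boot all_order all_algebra.
Set Implicit Arguments. Unset Strict Implicit. Unset Printing Implicit Defensive.
Import GRing.Theory.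

Section Gen.
Variable P : ogpos.
Local Notation le := (@ole P).

Lemma dimf_le f (x : P) : dimf f x <= f.
Proof.
elim: f x => [//|f IH] x /=.
case: pickP => [y _|_] //; by rewrite ltnS IH.
Qed.

Lemma odim_le_card (x : P) : odim x <= #|P|.
Proof. exact: dimf_le. Qed.

Fixpoint chainf (f : nat) (x : P) : seq P :=
  match f with
  | 0 => [::]
  | f.+1 => match [pick y | covers (@ole P) x y] with
            | Some y => y :: chainf f y
            | None => [::]
            end
  end.

Lemma size_chainf f x : size (chainf f x) = dimf f x.
Proof.
elim: f x => [//|f IH] x /=.
by case: pickP => [y _|_] //=; rewrite IH.
Qed.

Lemma path_chainf f x : path (covers le) x (chainf f x).
Proof.
elim: f x => [//|f IH] x /=.
by case: pickP => [y Hy|_] //=; rewrite Hy IH.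
Qed.

Lemma chainf_end f x :
  (size (chainf f x) < f /\ forall z, ~~ covers le (last x (chainf f x)) z)
  \/ size (chainf f x) = f.
Proof.
elim: f x => [|f IH] x /=; first by right.
case: pickP => [y Hy|H] /=.
  case: (IH y) => [[h1 h2]|h]; [left; split => // | right; by rewrite h].
left; split => // z; by rewrite H.
Qed.

Definition gtr : rel P := fun a b => le b a && (a != b).

Lemma covers_gtr y x : covers le y x -> gtr y x.
Proof. by case/and3P => h1 h2 _; rewrite /gtr h1 eq_sym h2. Qed.

Lemma gtr_trans : transitive gtr.
Proof.
move=> b a c /andP [h1 h2] /andP [h3 h4]; rewrite /gtr (ole_trans h3 h1) /=.
apply/eqP => E; subst c.
have : b = a by apply: ole_anti; rewrite h1 h3.
by move=> E; rewrite E eqxx in h2.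
Qed.

Lemma gtr_irr : irreflexive gtr.
Proof. by move=> a; rewrite /gtr eqxx andbF. Qed.

Lemma chain_max x : max_down_chain le x (chainf #|P| x).
Proof.
rewrite /max_down_chain path_chainf /=.
case: (chainf_end #|P| x) => [[_ h]|h]; first by apply/forallP.
exfalso.
have hs : sorted gtr (x :: chainf #|P| x).
  by rewrite /= (sub_path covers_gtr (path_chainf _ _)).
have hu := sorted_uniq gtr_trans gtr_irr hs.
move/card_uniqP: hu => hc.
have := max_card (mem (x :: chainf #|P| x)).
by rewrite hc /= h ltnn.
Qed.

Lemma odim_max x s : max_down_chain le x s -> size s = odim x.
Proof.
move=> h; rewrite /odim -size_chainf.
exact: (@ograded P x s _ h (chain_max x)).
Qed.

Lemma covers_dim w x : covers le w x -> odim w = (odim x).+1.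
Proof.
move=> hc.
have := chain_max x; rewrite /max_down_chain => /andP [hp hl].
have h : max_down_chain le w (x :: chainf #|P| x) by rewrite /max_down_chain /= hc hp hl.
by rewrite -(odim_max h) /= size_chainf.
Qed.

Definition itv (x y : P) := [set w | le x w && le w y].

Lemma lt_cover x y : le x y -> x != y -> exists w, covers le w x && le w y.
Proof.
move: {2}#|itv x y| (leqnn #|itv x y|) => c.
elim: c x y => [|c IH] x y hc hxy hne.
  by move: hc; rewrite leqn0 => /eqP/card0_eq/(_ x); rewrite inE ole_refl hxy.
case hcov: (covers le y x); first by exists y; rewrite hcov ole_refl.
move: hcov; rewrite /covers hxy hne /= => /negbT /forallPn [z].
rewrite negb_imply negb_or => /and3P [/andP [hxz hzy] hzx hzy'].
have hpr : itv x z \proper itv x y.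
  apply/properP; split.
    apply/subsetP => w; rewrite !inE => /andP [-> /= h]; exact: ole_trans h hzy.
  exists y; first by rewrite inE hxy ole_refl.
  rewrite inE hxy /=; apply/negP => hyz.
  have E : z = y by apply: ole_anti; rewrite hzy hyz.
  by rewrite E eqxx in hzy'.
have hc' : #|itv x z| <= c.
  by have := proper_card hpr; move=> h; rewrite -ltnS (leq_trans h hc).
have hxz' : x != z by rewrite eq_sym.
have [w /andP [hw1 hw2]] := IH x z hc' hxz hxz'.
exists w; apply/andP; split => //; exact: ole_trans hw2 hzy.
Qed.

Lemma odim_lt (x y : P) : le x y -> x != y -> odim x < odim y.
Proof.
move: {2}#|itv x y| (leqnn #|itv x y|) => c.
elim: c x y => [|c IH] x y hc hxy hne.
  by move: hc; rewrite leqn0 => /eqP/card0_eq/(_ x); rewrite inE ole_refl hxy.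
have [w /andP [hcw hwy]] := lt_cover hxy hne.
rewrite -ltnS -(covers_dim hcw) ltnS.
case: (eqVneq w y) => [-> //|hwy'].
have hpr : itv w y \proper itv x y.
  apply/properP; split.
    apply/subsetP => v; rewrite !inE => /andP [h ->]; rewrite andbT.
    by case/and3P: hcw => h1 _ _; exact: ole_trans h1 h.
  exists x; first by rewrite inE hxy ole_refl.
  rewrite inE; apply/negP => /andP [hwx _].
  case/and3P: hcw => h1 h2 _.
  have E : x = w by apply: ole_anti; rewrite h1 hwx.
  by rewrite E eqxx in h2.
have hc' : #|itv w y| <= c by rewrite -ltnS (leq_trans (proper_card hpr) hc).
exact: ltnW (IH w y hc' hwy hwy').
Qed.

Lemma odim_le (x y : P) : le x y -> odim x <= odim y.
Proof.
move=> h; case: (eqVneq x y) => [-> //|hne]; exact: ltnW (odim_lt h hne).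
Qed.

Lemma odim_eq (x y : P) : le x y -> odim x = odim y -> x = y.
Proof.
move=> h e; case: (eqVneq x y) => [//|hne].
by have := odim_lt h hne; rewrite e ltnn.
Qed.

Lemma clP (A : {set P}) z : reflect (exists2 y, y \in A & le z y) (z \in cl A).
Proof.
rewrite /cl inE; apply: (iffP existsP) => [[y /andP [h1 h2]]|[y h1 h2]]; exists y => //.
by rewrite h1 h2.
Qed.

Lemma in_cl1 (z x : P) : (z \in cl [set x]) = le z x.
Proof.
apply/clP/idP => [[y /set1P -> //]|h]; by exists x; rewrite ?set11.
Qed.

Lemma bd_big a N (x : P) : #|P| < N -> bd a N (cl [set x]) = cl [set x].
Proof.
move=> hN; apply/setP => z; rewrite /bd inE.
apply/orP/idP => [[/clP [y hy hzy]|/clP [y hy hzy]]|h].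
- move: hy; rewrite /Delta in_set => /andP [_ /andP [/eqP e _]].
  by have := odim_le_card y; rewrite e leqNgt hN.
- move: hy; rewrite in_set => /andP [hy _]; move: hy; rewrite in_set => /andP [hy _].
  by move: hy; rewrite in_cl1 => hy; rewrite in_cl1 (ole_trans hzy hy).
- right; apply/clP; exists x => //; last by rewrite -in_cl1.
  rewrite in_set; apply/andP; split; last first.
    by have := odim_le_card x => h'; exact: leq_ltn_trans h' hN.
  rewrite in_set in_cl1 ole_refl /=; apply/forallP => y; apply/implyP.
  rewrite in_cl1 => hy; apply/implyP => hxy; apply/eqP; apply: ole_anti.
  by rewrite hy hxy.
Qed.

Lemma Delta_char a m (y : P) :
  Delta a m (cl [set y]) =
  [set z in (if m < odim y then bd a m (cl [set y]) else cl [set y]) | odim z == m].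
Proof.
apply/setP => z; rewrite /Delta in_set [RHS]in_set.
case: ifP => hm.
  apply/idP/idP.
    move=> /and3P [hz h0 h]; rewrite h0 andbT /bd inE; apply/orP; left.
    apply/clP; exists z; last exact: ole_refl.
    by rewrite in_set hz h0 h.
  move=> /andP [hz /eqP ez]; move: hz; rewrite /bd inE => /orP [/clP [d hd hzd]|/clP [t ht hzt]].
    move: (hd); rewrite /Delta in_set => /andP [hd1 /andP [/eqP ed hd2]].
    have E : z = d by apply: odim_eq hzd _; rewrite ez ed.
    by subst d; rewrite hd1 ez eqxx hd2.
  move: ht; rewrite in_set => /andP [_ ht].
  by have := odim_le hzt; rewrite ez leqNgt ht.
apply/idP/idP; first by case/and3P => -> -> _.
move=> /andP [hz /eqP ez]; rewrite hz ez eqxx /=.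
apply/forallP => w; apply/implyP => hw; apply/negP => /andP [hc _].
have := covers_dim hc; move: hw; rewrite in_cl1 => hw.
move: hz; rewrite in_cl1 => hz.
have := odim_le hw => h1 h2.
by move: hm; rewrite h2 ez in h1; rewrite (leq_ltn_trans _ h1) // leqNgt; move/negbT: hm; rewrite -leqNgt.
Qed.

Lemma bd_dim a j (A : {set P}) z : z \in bd a j A -> odim z <= j.
Proof.
rewrite /bd inE => /orP [/clP [d hd hzd]|/clP [t ht hzt]].
  move: hd; rewrite /Delta in_set => /andP [_ /andP [/eqP <- _]]; exact: odim_le.
move: ht; rewrite in_set => /andP [_ ht]; exact: ltnW (leq_ltn_trans (odim_le hzt) ht).
Qed.

Lemma bd_full a j : (forall x : P, odim x <= j) -> bd a j [set: P] = [set: P].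
Proof.
move=> hj; apply/setP => v; rewrite in_setT /bd inE.
case: (@arg_maxnP _ v (fun t => le v t) (@odim P) (ole_refl v)) => mx hv hmx.
have hmax : forall t, le mx t -> t = mx.
  move=> t h; case: (eqVneq mx t) => [//|hne].
  have /= h' := hmx t (ole_trans hv h).
  by have := odim_lt h hne; rewrite ltnNge h'.
have := hj mx; rewrite leq_eqVlt => /orP [/eqP e|hl].
  apply/orP; left; apply/clP; exists mx => //.
  rewrite /Delta in_set in_setT e eqxx /=; apply/forallP => y; apply/implyP => _.
  apply/negP => /andP [/and3P [h1 h2 _] _].
  by rewrite (hmax y h1) eqxx in h2.
apply/orP; right; apply/clP; exists mx => //.
rewrite in_set hl andbT in_set in_setT /=; apply/forallP => y; apply/implyP => _.
by apply/implyP => h; rewrite (hmax y h).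
Qed.

Lemma no_plus_minus m (v v' : P) :
  m < odim v -> v' \in Delta true m (cl [set v]) -> v' \in bd false m [set: P] -> False.
Proof.
move=> hm; rewrite /Delta in_set in_cl1 => /andP [hv' /andP [/eqP e hf]].
have hne : v' != v by apply/eqP => E; move: hm; rewrite -E e ltnn.
have [w /andP [hcw hwv]] := lt_cover hv' hne.
have hl : olab v' w = true.
  move/forallP/(_ w): hf; rewrite in_cl1 hwv /= hcw /=.
  by case: (olab v' w).
rewrite /bd inE => /orP [/clP [d hd hzd]|/clP [t ht hzt]].
  move: hd; rewrite /Delta in_set => /andP [_ /andP [/eqP ed hd2]].
  have E : v' = d by apply: odim_eq hzd _; rewrite e ed.
  subst d; move/forallP/(_ w): hd2; rewrite in_setT /= hcw hl.
  by [].
move: ht; rewrite in_set => /andP [_ ht].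
by have := odim_le hzt; rewrite e leqNgt ht.
Qed.

End Gen.

Section Map.
Variables (P Q : ogpos) (f : P -> Q).
Hypothesis hf : inclusion f.

Lemma map_cl (x : P) : f @: cl [set x] = cl [set f x].
Proof.
case: hf => hm _.
have := hm x true (#|P| + #|Q|).+1.
by rewrite !bd_big // ltnS ?leq_addl ?leq_addr.
Qed.

Lemma map_le (x y : P) : ole (f x) (f y) = ole x y.
Proof.
case: hf => _ hi.
apply/idP/idP => h.
  move: h; rewrite -in_cl1 -map_cl => /imsetP [x' hx' /hi ->]; by rewrite -in_cl1.
by rewrite -in_cl1 -map_cl; apply: imset_f; rewrite in_cl1.
Qed.

Lemma map_below (w : Q) (x : P) : ole w (f x) -> exists2 u, w = f u & ole u x.
Proof.
rewrite -in_cl1 -map_cl => /imsetP [u hu ->]; exists u => //; by rewrite -in_cl1.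
Qed.

Lemma map_covers (y x : P) : covers (@ole Q) (f y) (f x) = covers (@ole P) y x.
Proof.
case: hf => _ hi.
rewrite /covers (map_le x y) (inj_eq hi).
case: (ole x y) => //=; case: (x != y) => //=.
apply/forallP/forallP => h z.
  have := h (f z); rewrite !map_le !(inj_eq hi); exact.
apply/implyP => /andP [h1 h2].
have [u E hu] := map_below h2; subst z.
move: h1; rewrite map_le => h1.
have := h u; rewrite h1 hu /= !(inj_eq hi); exact.
Qed.

Lemma map_chain (x : P) s : max_down_chain (@ole P) x s -> max_down_chain (@ole Q) (f x) (map f s).
Proof.
rewrite /max_down_chain => /andP [hp hl]; apply/andP; split.
  elim: s x hp {hl} => [//|z s IH] x /= /andP [h1 h2].
  by rewrite map_covers h1 IH.
rewrite last_map; apply/forallP => w; apply/negP => hc.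
have hw : ole w (f (last x s)) by case/and3P: hc.
have [u E _] := map_below hw; subst w.
by move: hc; rewrite map_covers (negbTE (forallP hl u)).
Qed.

Lemma map_odim (x : P) : odim (f x) = odim x.
Proof.
have h := map_chain (chain_max x).
by rewrite -(odim_max h) size_map size_chainf.
Qed.

Lemma map_Delta a m (y : P) : f @: Delta a m (cl [set y]) = Delta a m (cl [set f y]).
Proof.
case: hf => hm hi.
rewrite !Delta_char map_odim.
have -> : (if m < odim y then bd a m (cl [set f y]) else cl [set f y]) =
          f @: (if m < odim y then bd a m (cl [set y]) else cl [set y]).
  by case: ifP => _; rewrite ?hm ?map_cl.
apply/setP => z; rewrite in_set; apply/imsetP/idP.
  by move=> [u]; rewrite in_set => /andP [hu he] ->; rewrite imset_f // map_odim.
move=> /andP [/imsetP [u hu ->] he]; exists u => //; by rewrite in_set hu -map_odim.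
Qed.

Lemma map_vertex k (x : P) : flow_vertex k (f x) = flow_vertex k x.
Proof. by rewrite /flow_vertex map_odim. Qed.

Lemma map_edge k (x y : P) : flow_edge k (f x) (f y) = flow_edge k x y.
Proof.
case: hf => _ hi.
rewrite /flow_edge !map_vertex; congr [&& _, _ & _].
case: k => [m|m] //=.
  by rewrite -!map_Delta -imsetI ?imset_eq0 // => u v _ _; exact: hi.
by rewrite !setI0 !eqxx.
Qed.

Lemma img_down (w : Q) (x : P) : ole w (f x) -> w \in f @: [set: P].
Proof. by move/map_below => [u -> _]; apply: imset_f. Qed.

End Map.

Lemma inclusion_comp (A B C : ogpos) (f : A -> B) (g : B -> C) :
  inclusion f -> inclusion g -> inclusion (fun x => g (f x)).
Proof.
move=> [hf1 hf2] [hg1 hg2]; split; last exact: inj_comp.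
move=> x a n.
by rewrite -[RHS]hg1 -hf1 -imset_comp.
Qed.

Section Paste.
Variables (P Q R : ogpos) (iU : P -> R) (iV : Q -> R) (j : nat).
Hypothesis hp : is_paste j iU iV.

Lemma no_back m (a b : R) : j <= m -> flow_edge (Posz m) a b ->
  a \in iV @: [set: Q] -> b \in iU @: [set: P] -> False.
Proof.
case: hp => hU hV hun hint hbd.
move=> hjm /and3P [va vb hne] /imsetP [v _ Ea] /imsetP [u _ Eb]; subst a b.
case/set0Pn: hne => z; rewrite inE => /andP [hz1 hz2].
move: hz1; rewrite /= -(map_Delta hV) => /imsetP [v' hv' Ez]; subst z.
have hzU : iV v' \in iU @: [set: P].
  move: hz2; rewrite /= /Delta in_set in_cl1 => /andP [h _]; exact: (img_down hU h).
have : iV v' \in iU @: [set: P] :&: iV @: [set: Q] by rewrite inE hzU imset_f.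
rewrite hint hbd mem_imset; last by case: hV.
move=> hb.
have ev' : odim v' = m.
  by move: hv'; rewrite /Delta in_set => /andP [_ /andP [/eqP -> _]].
move: hjm; rewrite leq_eqVlt => /orP [/eqP E|hlt].
  rewrite -E in hv' va.
  have va' : j < odim v by move: va; rewrite /flow_vertex ltz_nat (map_odim hV).
  exact: (no_plus_minus va' hv' hb).
by have := bd_dim hb; rewrite ev' leqNgt hlt.
Qed.

Lemma paste_surjU : (forall q : Q, odim q <= j) -> forall r, r \in iU @: [set: P].
Proof.
case: hp => hU hV hun hint hbd => hq r.
have : r \in [set: R] by [].
rewrite -hun inE => /orP [//|/imsetP [q _ ->]].
have : iV q \in iV @: bd false j [set: Q] by rewrite bd_full // imset_f.
by rewrite -hbd => /imsetP [p _ ->]; exact: imset_f.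
Qed.

Lemma paste_surjV : (forall p : P, odim p <= j) -> forall r, r \in iV @: [set: Q].
Proof.
case: hp => hU hV hun hint hbd => hq r.
have : r \in [set: R] by [].
rewrite -hun inE => /orP [/imsetP [q _ ->]|//].
have : iU q \in iU @: bd true j [set: P] by rewrite bd_full // imset_f.
by rewrite hbd => /imsetP [p _ ->]; exact: imset_f.
Qed.

End Paste.

Lemma fwd_closed (T : finType) (e : rel T) (S : {set T}) x s :
  (forall a b, a \in S -> e a b -> b \in S) -> x \in S -> path e x s ->
  all (fun z => z \in S) s.
Proof.
move=> hS; elim: s x => //= z s IH x hx /andP [h1 h2].
have hz := hS _ _ hx h1; by rewrite hz (IH z hz h2).
Qed.

Lemma bwd_closed (T : finType) (e : rel T) (S : {set T}) x s :
  (forall a b, e a b -> b \in S -> a \in S) -> path e x s -> last x s \in S ->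
  all (fun z => z \in S) (x :: s).
Proof.
move=> hS; elim: s x => [|z s IH] x /=; first by move=> _ ->.
move=> /andP [h1 h2] hl.
have /= /andP [hz hs] := IH z h2 hl.
by rewrite (hS _ _ h1 hz) hz hs.
Qed.

Lemma path_vertex (P : ogpos) k (x : P) s :
  path (flow_edge k) x s -> all (flow_vertex k) s.
Proof.
elim: s x => //= z s IH x /andP [/and3P [_ -> _] h]; exact: IH h.
Qed.

Lemma finish (P Q : ogpos) (i : P -> Q) k s : inclusion i ->
  all (fun z => z \in i @: [set: P]) s -> all (flow_vertex k) s ->
  all (fun z => z \in i @: [set v | flow_vertex k v]) s.
Proof.
move=> hi /allP h1 /allP h2; apply/allP => z hz.
case/imsetP: (h1 z hz) => v _ E; subst z.
by rewrite imset_f // inE -(map_vertex hi); exact: h2.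
Qed.

Lemma surj_case (P Q : ogpos) (i : P -> Q) k : inclusion i ->
  (forall u, u \in i @: [set: P]) ->
  path_induced (flow_edge k) (i @: [set v | flow_vertex k v]).
Proof.
move=> hi hs x y _ _ s hpth _.
apply: finish hi _ (path_vertex hpth).
by apply/allP => z _.
Qed.

Lemma pull (T1 T2 : finType) (g : T1 -> T2) (D : {set T1}) s :
  all (fun z => z \in g @: D) s -> exists2 s', s = map g s' & all (fun u => u \in D) s'.
Proof.
elim: s => [|z s IH] /=; first by exists [::].
case/andP => /imsetP [u hu ->] /IH [s' -> hs']; exists (u :: s') => //=.
by rewrite hu hs'.
Qed.

Lemma path_map_inc (P Q : ogpos) (g : P -> Q) k x s : inclusion g ->
  path (flow_edge k) (g x) (map g s) = path (flow_edge k) x s.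
Proof.
move=> hg; elim: s x => //= z s IH x; by rewrite (map_edge hg) IH.
Qed.

Lemma odim_dimS (P : ogpos) (x : P) : odim x <= dimS [set: P].
Proof. exact: (leq_bigmax_cond (P := fun x => x \in [set: P])). Qed.

Lemma main (V U : ogpos) (i : V -> U) : submol i ->
  inclusion i /\ (forall m, m.+1 = dimS [set: U] ->
    path_induced (flow_edge (Posz m)) (i @: [set v | flow_vertex (Posz m) v])).
Proof.
elim => {V U i}.
- move=> V U f _ _ [hinc hbij]; split => // m _; apply: surj_case => // u.
  case: hbij => g _ gK; rewrite -[u]gK; exact: imset_f.
- move=> k U V W iU iV _ _ _ hp.
  have hU : inclusion iU by case: hp.
  have hV : inclusion iV by case: hp.
  split => // m hm.
  case: (ltnP m k) => hk.
    apply: surj_case => //; apply: (paste_surjU hp) => q.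
    by rewrite -(map_odim hV); apply: leq_trans (odim_dimS _) _; rewrite -hm.
  move=> x y hx hy s hpth hl.
  apply: finish hU _ (path_vertex hpth).
  have : all (fun z => z \in iU @: [set: U]) (x :: s).
    apply: bwd_closed hpth _.
      move=> a b hab hb; case: (hp) => _ _ hun _ _.
      have : a \in [set: W] by [].
      rewrite -hun inE => /orP [//|ha]; exfalso; exact: (no_back hp hk hab ha hb).
    rewrite hl; case/imsetP: hy => u _ ->; exact: imset_f.
  by case/andP.
- move=> k U V W iU iV _ _ _ hp.
  have hU : inclusion iU by case: hp.
  have hV : inclusion iV by case: hp.
  split => // m hm.
  case: (ltnP m k) => hk.
    apply: surj_case => //; apply: (paste_surjV hp) => q.
    by rewrite -(map_odim hU); apply: leq_trans (odim_dimS _) _; rewrite -hm.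
  move=> x y hx hy s hpth hl.
  apply: finish hV _ (path_vertex hpth).
  apply: fwd_closed hpth.
    move=> a b ha hab; case: (hp) => _ _ hun _ _.
    have : b \in [set: W] by [].
    rewrite -hun inE => /orP [hb|//]; exfalso; exact: (no_back hp hk hab ha hb).
  case/imsetP: hx => u _ ->; exact: imset_f.
- move=> A B C f g _ [hf IHf] _ [hg IHg].
  split; first exact: inclusion_comp.
  move=> m hm x y hx hy s hpth hl.
  case/imsetP: hx => a ha Ex; case/imsetP: hy => b hb Ey; subst x; rewrite Ey in hl.
  have haB : f a \in [set v | flow_vertex (Posz m) v] by rewrite inE (map_vertex hf) -inE.
  have hbB : f b \in [set v | flow_vertex (Posz m) v] by rewrite inE (map_vertex hf) -inE.
  have hB : m.+1 = dimS [set: B].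
    apply/eqP; rewrite eqn_leq; apply/andP; split.
      apply: leq_trans (odim_dimS (f a)).
      by move: haB; rewrite inE /flow_vertex ltz_nat.
    apply/bigmax_leqP => q _; rewrite hm -(map_odim hg); exact: odim_dimS.
  have := IHg m hm _ _ (imset_f g haB) (imset_f g hbB) s hpth hl.
  case/pull => s' E _; subst s.
  move: hpth hl; rewrite (path_map_inc _ _ _ hg) last_map => hpth hl.
  have hl' : last (f a) s' = f b by case: hg => _ hi; exact: hi hl.
  have := IHf m hB _ _ (imset_f f ha) (imset_f f hb) s' hpth hl'.
  rewrite all_map => /allP h; apply/allP => z hz.
  case/imsetP: (h z hz) => w hw ->; apply/imsetP; by exists w.
Qed.

Theorem proposition3p22 (U V : ogpos) (i : V -> U) (n : nat) :
  regmol U -> regmol V -> inclusion i ->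
  n = dimS [set: U] -> n = dimS [set: V] ->
  round [set: V] ->
  submol i ->
  path_induced (flow_edge (n%:Z - 1)%R)
               (i @: [set v | flow_vertex (n%:Z - 1)%R v]).
Proof.
move=> _ _ hi hn _ _ hsm.
case: n hn => [|m] hn.
  move=> x y _ _ [|z s] //= /andP [h _].
  by move: h; rewrite /flow_edge /= setI0 eqxx.
have -> : ((m.+1)%:Z - 1)%R = Posz m by rewrite intS addrAC subrr add0r.
exact: (proj2 (main hsm)) m hn.
Qed.
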